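(* Let $M$ be an $A\mathcal{V}$-module with representation $\rho:\mathcal{V}\to\mathfrak{gl}(M)$ and let $s\ge0$. Then $\rho\in\mathrm{Diff}_s(\mathcal{V},\mathrm{End}_\Bbbk(M))$ (i.e. $M$ is $s$-differentiable) if and only if $\mathfrak{m}^s\mathcal{L}_+$ annihilates $M$, where $\mathcal{L}_+$ acts on $M$ by $X^m\frac{\partial}{\partial X_p}\cdot v=\sum_{0\le k\le m}(-1)^{|k|}\binom{m}{k}x^k\rho\!\left(x^{m-k}\frac{\partial}{\partial x_p}\right)v$.
   Context: $\Bbbk$ algebraically closed, characteristic $0$; $A=\Bbbk[x_1,\dots,x_n]$; $\mathcal{V}=\mathrm{Der}(A)$. An $A\mathcal{V}$-module is an $A$-module and $\mathcal{V}$-module $M$ with $\eta(fm)=\eta(f)m+f(\eta m)$; $\rho$ is the action map of $\mathcal{V}$. $\mathcal{L}=\mathrm{Der}(\Bbbk[X_1,\dots,X_n])$, $\mathfrak{m}=(X_1,\dots,X_n)\subset\Bbbk[X_1,\dots,X_n]$, $\mathcal{L}_+=\mathfrak{m}\mathcal{L}$, so $\mathfrak{m}^s\mathcal{L}_+$ is spanned by $X^k\partial/\partial X_i$ with $|k|\ge s+1$; the stated formula (multi-index notation, $\binom{m}{k}=\prod\binom{m_i}{k_i}$) defines an $\mathcal{L}_+$-action commuting with that of the Weyl algebra, coming from an isomorphism $A\#U(\mathcal{V})\cong\mathcal{D}\otimes U(\mathcal{L}_+)$. Differential operators: for a commutative $\Bbbk$-algebra $R$ and $R$-modules $M',N'$,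 $\delta(f)D=D\circ f-f\circ D$ on $\mathrm{Hom}_\Bbbk(M',N')$; $\mathrm{Diff}_{-1}=0$, $\mathrm{Diff}_{s+1}(M',N')=\{D:\delta(f)D\in\mathrm{Diff}_s(M',N')\ \forall f\in R\}$; thus $D\in\mathrm{Diff}_s$ iff $\delta(f_1)\cdots\delta(f_{s+1})D=0$ for all $f_i$. Here $R=A$, $\mathcal{V}$ is an $A$-module via $(f\eta)(g)=f\eta(g)$, and $\mathrm{End}_\Bbbk(M)$ is an $A$-module via $f\cdot T=f\circ T$, so $(\delta(f)\rho)(\eta)=\rho(f\eta)-f\circ\rho(\eta)$. $M$ is called $s$-differentiable if $\rho\in\mathrm{Diff}_s(\mathcal{V},\mathrm{End}_\Bbbk(M))$. *)

(* Defs.v *)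
From HB Require Import structures.
From mathcomp Require Import all_boot all_order all_algebra.
From mathcomp Require Import mpoly.
Set Implicit Arguments. Unset Strict Implicit. Unset Printing Implicit Defensive.
Import Order.TTheory GRing.Theory.
Local Open Scope ring_scope.

Section AV.
Variables (K : fieldType) (n : nat).

Definition Apoly := {mpoly K[n]}.

(* V = Der(A) = (+)_i A d/dx_i ; a vector field eta = sum_i eta_i d/dx_i
   is stored as the row vector of its coefficients (eta_i)_i. *)
Definition VF := 'rV[{mpoly K[n]}]_n.

Definition vf_apply (eta : VF) (g : {mpoly K[n]}) : {mpoly K[n]} :=
  \sum_(i < n) eta 0 i * mderiv i g.

Definition vf_bracket (eta zeta : VF) : VF :=
  \row_(i < n) (vf_apply eta (zeta 0 i) - vf_apply zeta (eta 0 i)).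

Definition vf_basis (f : {mpoly K[n]}) (p : 'I_n) : VF :=
  \row_(i < n) (if i == p then f else 0).

Variable (M : lmodType K).

Record AVmodule (act : {mpoly K[n]} -> M -> M) (rho : VF -> M -> M) : Prop := {
  act_addl : forall f g m, act (f + g) m = act f m + act g m;
  act_linr : forall f c m m', act f (c *: m + m') = c *: act f m + act f m';
  act_mul  : forall f g m, act (f * g) m = act f (act g m);
  act_const : forall c m, act (c%:MP) m = c *: m;
  rho_add : forall eta zeta m, rho (eta + zeta) m = rho eta m + rho zeta m;
  rho_scale : forall c eta m, rho (c%:MP *: eta) m = c *: rho eta m;
  rho_linr : forall eta c m m', rho eta (c *: m + m') = c *: rho eta m + rho eta m';
  rho_bracket : forall eta zeta m,
      rho (vf_bracket eta zeta) m = rho eta (rho zeta m) - rho zeta (rho eta m);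
  rho_leibniz : forall eta f m,
      rho eta (act f m) = act (vf_apply eta f) m + act f (rho eta m)
}.

Definition diff_delta (act : {mpoly K[n]} -> M -> M) (f : {mpoly K[n]})
  (D : VF -> M -> M) : VF -> M -> M :=
  fun eta m => D (f *: eta) m - act f (D eta m).

(* DiffShift act k D  <->  D \in Diff_{k-1}(V, End_K(M)) :
   Diff_{-1} = 0, Diff_{s+1} = {D | forall f, delta(f) D \in Diff_s}. *)
Fixpoint DiffShift (act : {mpoly K[n]} -> M -> M) (k : nat)
  (D : VF -> M -> M) : Prop :=
  match k with
  | 0 => forall eta m, D eta m = 0
  | k'.+1 => forall f, DiffShift act k' (diff_delta act f D)
  end.

Definition Diff (act : {mpoly K[n]} -> M -> M) (s : nat) (D : VF -> M -> M) :=
  DiffShift act s.+1 D.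

Definition Lplus_act (act : {mpoly K[n]} -> M -> M) (rho : VF -> M -> M)
  (m : 'X_{1..n}) (p : 'I_n) (v : M) : M :=
  \sum_(k : 'X_{1..n < (mdeg m).+1} | (k <= m)%MM)
     (((-1) ^+ mdeg k * (\prod_(i < n) 'C(m i, k i))%:R) : K) *:
       act 'X_[(k : 'X_{1..n})]
           (rho (vf_basis 'X_[(m - k)%MM] p) v).

(* m^s L_+ (spanned by X^m d/dX_p with |m| >= s+1) annihilates M *)
Definition annihilated_by_ms_Lplus (act : {mpoly K[n]} -> M -> M)
  (rho : VF -> M -> M) (s : nat) : Prop :=
  forall (m : 'X_{1..n}) (p : 'I_n) (v : M),
    (s.+1 <= mdeg m)%N -> Lplus_act act rho m p v = 0.

End AV.

(* Main.v *)
Require Import Defs.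
From HB Require Import structures.
From mathcomp Require Import all_boot all_order all_algebra.
From mathcomp Require Import mpoly.
From mathcomp Require Import ring zify.
From Stdlib Require Import FunctionalExtensionality.
Set Implicit Arguments. Unset Strict Implicit. Unset Printing Implicit Defensive.
Import Order.TTheory GRing.Theory.
Local Open Scope ring_scope.

Section Proof.
Variables (K : fieldType) (n : nat) (M : lmodType K).
Variables (act : {mpoly K[n]} -> M -> M) (rho : VF K n -> M -> M).
Hypothesis HAV : AVmodule act rho.

Local Notation P := {mpoly K[n]}.
Local Notation Op := (VF K n -> M -> M).

Lemma actD f a b : act f (a + b) = act f a + act f b.
Proof. by have := act_linr HAV f 1 a b; rewrite !scale1r. Qed.
Lemma act0r f : act f 0 = 0.
Proof. by apply: (addrI (act f 0)); rewrite -actD !addr0. Qed.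
Lemma actZ f c a : act f (c *: a) = c *: act f a.
Proof. by have := act_linr HAV f c a 0; rewrite !addr0 act0r addr0. Qed.
Lemma actN f a : act f (- a) = - act f a.
Proof. by rewrite -scaleN1r actZ scaleN1r. Qed.
Lemma actB f a b : act f (a - b) = act f a - act f b.
Proof. by rewrite actD actN. Qed.
Lemma act0l w : act 0 w = 0.
Proof. by apply: (addrI (act 0 w)); rewrite -(act_addl HAV) !addr0. Qed.
Lemma act1 w : act 1 w = w.
Proof. by rewrite -mpolyC1 (act_const HAV) scale1r. Qed.
Lemma actZl c g w : act (c *: g) w = c *: act g w.
Proof. by rewrite -mul_mpolyC (act_mul HAV) (act_const HAV). Qed.
Lemma actC f g w : act f (act g w) = act g (act f w).
Proof. by rewrite -!(act_mul HAV) mulrC. Qed.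
Lemma act_sum (I : Type) (r : seq I) (Q : pred I) (F : I -> P) w :
  act (\sum_(i <- r | Q i) F i) w = \sum_(i <- r | Q i) act (F i) w.
Proof. by apply: (big_morph (fun g => act g w)); [move=> x y; apply: (act_addl HAV)|apply: act0l]. Qed.
Lemma act_sumr (I : Type) (r : seq I) (Q : pred I) (F : I -> M) f :
  act f (\sum_(i <- r | Q i) F i) = \sum_(i <- r | Q i) act f (F i).
Proof. by apply: big_morph; [move=> x y; apply: actD|apply: act0r]. Qed.

Lemma swap4 (V : zmodType) (a b c d : V) : a - b - (c - d) = a - c - (b - d).
Proof. by rewrite !opprB !addrA (addrAC a (-b)) (addrAC a (-c)) -!addrA (addrC (-b)). Qed.

Definition dl (f : P) (D : Op) : Op := diff_delta act f D.
Definition deltas (l : seq P) (D : Op) : Op := foldl (fun D f => dl f D) D l.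

Lemma dlE f D eta v : dl f D eta v = D (f *: eta) v - act f (D eta v).
Proof. by []. Qed.

Lemma dl_comm f g D : dl f (dl g D) = dl g (dl f D).
Proof.
apply: functional_extensionality => eta; apply: functional_extensionality => v.
rewrite !dlE !actB !scalerA (mulrC f g) (actC f g).
exact: swap4.
Qed.

Lemma deltas_comm l f D : deltas l (dl f D) = dl f (deltas l D).
Proof. by elim: l D => //= g l IH D; rewrite -IH dl_comm. Qed.

Lemma deltas_rcons l f D : deltas (rcons l f) D = dl f (deltas l D).
Proof. by rewrite /deltas foldl_rcons. Qed.

Lemma deltas_zero l D : (forall eta v, D eta v = 0) -> forall eta v, deltas l D eta v = 0.
Proof.
elim: l D => //= f l IH D H; apply: IH => eta v.
by rewrite dlE !H act0r subr0.
Qed.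

Lemma DiffShift_deltas k D : DiffShift act k D ->
  forall l, (k <= size l)%N -> forall eta v, deltas l D eta v = 0.
Proof.
elim: k D => [|k IH] D /= H l.
  by move=> _; apply: deltas_zero.
case: l => //= f l Hs; exact: IH.
Qed.

Definition Lin (D : Op) :=
  (forall eta zeta v, D (eta + zeta) v = D eta v + D zeta v) /\
  (forall c eta v, D (c%:MP *: eta) v = c *: D eta v).

Lemma Lin_dl f D : Lin D -> Lin (dl f D).
Proof.
case=> HD HZ; split=> [eta zeta v|c eta v]; rewrite !dlE.
  rewrite scalerDr HD HD actD opprD !addrA; congr (_ + _); rewrite -!addrA; congr (_ + _).
  by rewrite addrC.
by rewrite scalerA mulrC -scalerA HZ HZ actZ scalerBr.
Qed.

Lemma Lin_deltas l D : Lin D -> Lin (deltas l D).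
Proof. by elim: l D => //= f l IH D HD; apply/IH/Lin_dl. Qed.

Lemma Lin0 D : Lin D -> forall v, D 0 v = 0.
Proof.
case=> HD _ v; by apply: (addrI (D 0 v)); rewrite -HD !addr0.
Qed.

Lemma Lin_sum D (I : Type) (r : seq I) (F : I -> VF K n) v : Lin D ->
  D (\sum_(i <- r) F i) v = \sum_(i <- r) D (F i) v.
Proof.
move=> HL; apply: (big_morph (fun e => D e v)); first by move=> x y; apply: HL.1.
exact: Lin0.
Qed.

Lemma rho_Lin : Lin rho.
Proof. by split; [apply: (rho_add HAV)|apply: (rho_scale HAV)]. Qed.


Lemma mpoly_ind2 (Q : P -> Prop) : Q 1 -> (forall j g, Q g -> Q ('X_j * g)) ->
  (forall g h, Q g -> Q h -> Q (g + h)) -> (forall c g, Q g -> Q (c *: g)) ->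
  forall g, Q g.
Proof.
move=> H1 HX HD HZ.
have HM : forall d (m : 'X_{1..n}), mdeg m = d -> Q 'X_[m].
  elim=> [|d IH] m Hm.
    by move/eqP: Hm; rewrite mdeg_eq0 => /eqP ->; rewrite mpolyX0.
  case: (pickP (fun j => m j != 0%N)) => [j hj|h0]; last first.
    have m0 : m = 0%MM by apply/mnmP => i; rewrite mnm0E; move/negbFE/eqP: (h0 i).
    by move: Hm; rewrite m0 mdeg0.
  have le1 : (U_(j) <= m)%MM by rewrite lep1mP.
  have Em := submK le1.
  rewrite -Em mpolyXD mulrC; apply: HX; apply: IH.
  by move: Hm; rewrite -{1}Em mdegD mdeg1 addn1 => -[].
elim/mpolyind => [|c m p _ _ Hp]; first by rewrite -(scale0r 1); apply: HZ.
by apply: HD => //; apply: HZ; apply: (HM _ m).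
Qed.

Definition X (j : 'I_n) : P := 'X_j.

Lemma dl_zero_all E : Lin E -> (forall j eta v, dl (X j) E eta v = 0) ->
  forall f eta v, dl f E eta v = 0.
Proof.
move=> HL HX f eta v; rewrite dlE; apply/eqP; rewrite subr_eq0; apply/eqP.
move: f eta v; apply: mpoly_ind2.
- by move=> eta v; rewrite scale1r act1.
- move=> j g IH eta v; rewrite -scalerA.
  move/eqP: (HX j (g *: eta) v); rewrite dlE subr_eq0 => /eqP ->.
  by rewrite IH (act_mul HAV).
- by move=> g h Hg Hh eta v; rewrite scalerDl HL.1 Hg Hh (act_addl HAV).
- move=> c g Hg eta v; rewrite -mul_mpolyC -scalerA HL.2 Hg.
  by rewrite (act_mul HAV) (act_const HAV).
Qed.

Definition Zr (D : Op) (r : nat) :=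
  forall l : seq 'I_n, (r <= size l)%N -> forall eta v, deltas (map X l) D eta v = 0.

Lemma Zr_DiffShift k D : Lin D -> Zr D k -> DiffShift act k D.
Proof.
elim: k D => [|k IH] D HL HZ /=.
  by move=> eta v; apply: (HZ [::]).
move=> f; apply: IH; first exact: Lin_dl.
move=> l Hl eta v; rewrite deltas_comm.
apply: dl_zero_all; first exact: Lin_deltas.
move=> j eta' v'; rewrite -deltas_rcons -map_rcons; apply: HZ.
by rewrite size_rcons.
Qed.

Lemma vf_basisM (g h : P) p : vf_basis (g * h) p = g *: vf_basis h p.
Proof. by apply/rowP => i; rewrite !mxE; case: eqP => _; rewrite ?mulr0. Qed.
Lemma vf_basisD (g h : P) p : vf_basis (g + h) p = vf_basis g p + vf_basis h p.
Proof. by apply/rowP => i; rewrite !mxE; case: eqP => _; rewrite ?addr0. Qed.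
Lemma vf_basisE (eta : VF K n) : eta = \sum_(p < n) vf_basis (eta 0 p) p.
Proof.
apply/rowP => i; rewrite summxE (bigD1 i) //= big1 ?addr0; first by rewrite !mxE eqxx.
by move=> j /negbTE hj; rewrite !mxE eq_sym hj.
Qed.

Lemma claimA s : (forall l : seq 'I_n, (s <= size l)%N -> forall p v,
     deltas (map X l) rho (vf_basis (1 : P) p) v = 0) -> Zr rho s.
Proof.
move=> H.
suff Hg : forall g : P, forall l, (s <= size l)%N -> forall p v,
     deltas (map X l) rho (vf_basis g p) v = 0.
  move=> l Hl eta v; rewrite (vf_basisE eta) Lin_sum; last exact/Lin_deltas/rho_Lin.
  by rewrite big1 // => p _; apply: Hg.
apply: mpoly_ind2 => //.
- move=> j g IH l Hl p v; rewrite vf_basisM.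
  have := dlE (X j) (deltas (map X l) rho) (vf_basis g p) v.
  rewrite -deltas_rcons -map_rcons IH ?size_rcons ?(leq_trans Hl) // IH // act0r subr0.
  by move->.
- move=> g h Hg Hh l Hl p v; rewrite vf_basisD (Lin_deltas _ rho_Lin).1 Hg ?Hh ?addr0 //.
- move=> c g Hg l Hl p v; rewrite -mul_mpolyC vf_basisM (Lin_deltas _ rho_Lin).2 Hg ?scaler0 //.
Qed.


Lemma big_supp_eq (T : eqType) (V : zmodType) (s t : seq T) (F : T -> V) :
  uniq s -> uniq t -> (forall x, x \in s -> x \notin t -> F x = 0) ->
  (forall x, x \in t -> x \notin s -> F x = 0) ->
  \sum_(x <- s) F x = \sum_(x <- t) F x.
Proof.
move=> us ut H1 H2.
have -> : \sum_(x <- s) F x = \sum_(x <- s | x \in t) F x.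
  rewrite [RHS]big_mkcond /=; apply: eq_big_seq => x xs; case: ifP => // /negbT; exact: H1.
have -> : \sum_(x <- t) F x = \sum_(x <- t | x \in s) F x.
  rewrite [RHS]big_mkcond /=; apply: eq_big_seq => x xs; case: ifP => // /negbT; exact: H2.
rewrite -[LHS]big_filter -[RHS]big_filter; apply: perm_big; apply: uniq_perm; rewrite ?filter_uniq //.
by move=> x; rewrite !mem_filter andbC.
Qed.

Local Notation A2 := {mpoly P[n]}.

Definition Phi (D : Op) (eta : VF K n) (v : M) (c : A2) : M :=
  \sum_(b <- msupp c) act (c@_b) (D (('X_[b] : P) *: eta) v).


Lemma Phi_supp D eta v c (s : seq 'X_{1..n}) : uniq s -> {subset msupp c <= s} ->
  Phi D eta v c = \sum_(b <- s) act (c@_b) (D (('X_[b] : P) *: eta) v).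
Proof.
move=> us sub; apply: big_supp_eq => //.
- by move=> x /sub ->.
- by move=> x _; rewrite mcoeff_msupp negbK => /eqP ->; rewrite act0l.
Qed.


Lemma PhiD D eta v c c' : Phi D eta v (c + c') = Phi D eta v c + Phi D eta v c'.
Proof.
set s := undup (msupp c ++ msupp c').
have us : uniq s by apply: undup_uniq.
rewrite (@Phi_supp _ _ _ _ s) // ?(@Phi_supp _ _ _ c s) // ?(@Phi_supp _ _ _ c' s) //.
- by rewrite -big_split /=; apply: eq_bigr => b _; rewrite mcoeffD (act_addl HAV).
- by move=> x xs; rewrite mem_undup mem_cat xs orbT.
- by move=> x xs; rewrite mem_undup mem_cat xs.
- by move=> x /msuppD_le; rewrite mem_undup.
Qed.

Lemma Phi0 D eta v : Phi D eta v 0 = 0.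
Proof. by rewrite (@Phi_supp _ _ _ _ [::]) ?big_nil // => x; rewrite mcoeff_msupp mcoeff0 eqxx. Qed.

Lemma PhiB D eta v c c' : Phi D eta v (c - c') = Phi D eta v c - Phi D eta v c'.
Proof. by apply/eqP; rewrite eq_sym subr_eq -PhiD subrK. Qed.

Lemma Phi_sum D eta v (I : Type) (r : seq I) (Q : pred I) (F : I -> A2) :
  Phi D eta v (\sum_(i <- r | Q i) F i) = \sum_(i <- r | Q i) Phi D eta v (F i).
Proof. by apply: big_morph; [apply: PhiD|apply: Phi0]. Qed.


Lemma PhiCX D eta v (a : P) b : Phi D eta v (a%:MP * 'X_[b]) = act a (D (('X_[b] : P) *: eta) v).
Proof.
rewrite (@Phi_supp _ _ _ _ [:: b]) // ?big_seq1.
  by rewrite mcoeffCM mcoeffX eqxx mulr1.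
by move=> x; rewrite mul_mpolyC => /msuppZ_le; rewrite msuppX.
Qed.

Lemma PhiMX D eta v c j : Phi D eta v (c * 'X_j) = Phi D ((X j) *: eta) v c.
Proof.
rewrite (@Phi_supp _ _ _ _ [seq (U_(j) + b)%MM | b <- msupp c]).
- rewrite /Phi big_map; apply: eq_bigr => b _; rewrite mcoeffMX.
  by rewrite mpolyXD scalerA mulrC.
- by rewrite map_inj_uniq // => m1 m2; apply: addmI.
- by move=> x; rewrite (perm_mem (msuppMX _ _)).
Qed.

Lemma PhiMC D eta v c (a : P) : Phi D eta v (c * a%:MP) = act a (Phi D eta v c).
Proof.
rewrite [X in _ = act a X]/Phi act_sumr (@Phi_supp _ _ _ _ (msupp c)) //.
  by apply: eq_bigr => b _; rewrite (mulrC c) mcoeffCM (act_mul HAV).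
move=> x; rewrite !mcoeff_msupp (mulrC c) mcoeffCM; apply: contra => /eqP ->.
by rewrite mulr0.
Qed.


Lemma Phi_deltas (l : seq 'I_n) D eta v :
  Phi D eta v (\prod_(j <- l) ('X_j - (X j)%:MP)) = deltas (map X l) D eta v.
Proof.
elim/last_ind: l eta v => [|l j IH] eta v.
  have h : (1 : A2) = (1 : P)%:MP * 'X_[0] by rewrite mpolyC1 mpolyX0 mulr1.
  by rewrite big_nil h PhiCX mpolyX0 act1 scale1r.
rewrite big_rcons /= mulrBr PhiB PhiMX PhiMC !IH map_rcons deltas_rcons.
by rewrite dlE.
Qed.


Definition coefm (m k : 'X_{1..n}) : K :=
  (-1) ^+ mdeg k * (\prod_(i < n) 'C(m i, k i))%:R.

Lemma prod_split (F : 'I_n -> nat) j :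
  (\prod_(i < n) F i = F j * \prod_(i < n | i != j) F i)%N.
Proof. by rewrite (bigD1 j). Qed.

Lemma coefm_C1 m k j : ~~ (U_(j) <= k)%MM -> coefm (m + U_(j)) k = coefm m k.
Proof.
rewrite lep1mP negbK => /eqP kj; rewrite /coefm (prod_split _ j) [in RHS](prod_split _ j).
rewrite kj !bin0; congr (_ * (_ * _)%:R); apply: eq_bigr => i ij.
by rewrite mnmDE mnm1E eq_sym (negbTE ij) addn0.
Qed.

Lemma mdeg_subU (k : 'X_{1..n}) j : (U_(j) <= k)%MM -> mdeg k = (mdeg (k - U_(j))).+1.
Proof. by move=> h; rewrite -{1}(submK h) mdegD mdeg1 addn1. Qed.

Lemma coefm_C2 m k j : (U_(j) <= k)%MM ->
  coefm (m + U_(j)) k = coefm m k - coefm m (k - U_(j)).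
Proof.
move=> h; move: (h); rewrite lep1mP => kj0.
rewrite /coefm (mdeg_subU h) exprS.
rewrite (prod_split _ j) [X in _ = _ * X%:R - _](prod_split _ j).
rewrite [X in _ = _ - _ * X%:R](prod_split _ j).
have -> : (\prod_(i < n | i != j) 'C((m + U_(j))%MM i, k i) =
           \prod_(i < n | i != j) 'C(m i, k i))%N.
  by apply: eq_bigr => i ij; rewrite mnmDE mnm1E eq_sym (negbTE ij) addn0.
have -> : (\prod_(i < n | i != j) 'C(m i, (k - U_(j))%MM i) =
           \prod_(i < n | i != j) 'C(m i, k i))%N.
  by apply: eq_bigr => i ij; rewrite mnmBE mnm1E eq_sym (negbTE ij) subn0.
rewrite mnmDE mnmBE mnm1E eqxx addn1 subn1.
case: (k j) kj0 => // t _ /=.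
rewrite binS !natrM natrD; ring.
Qed.

Lemma coefm_C3 m k : ~~ (k <= m)%MM -> coefm m k = 0.
Proof.
move=> h; have [i hi] : exists i, (m i < k i)%N.
  apply/existsP; move: h; apply: contraR; rewrite negb_exists => /forallP H.
  by apply/mnm_lepP => i; move: (H i); rewrite -leqNgt.
by rewrite /coefm (prod_split _ i) bin_small // mul0n mulr0.
Qed.


Definition Qm (m : 'X_{1..n}) : A2 :=
  \sum_(k : 'X_{1..n < (mdeg m).+1} | (k <= m)%MM)
     (coefm m k *: ('X_[k] : P))%:MP * 'X_[m - k].

Lemma subKm (m b : 'X_{1..n}) : (b <= m)%MM -> (m - (m - b))%MM = b.
Proof. by move/mnm_lepP => h; apply/mnmP => i; rewrite !mnmBE subKn. Qed.

Lemma Qm_coef m b : (Qm m)@_b =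
  if (b <= m)%MM then coefm m (m - b) *: ('X_[m - b] : P) else 0.
Proof.
rewrite /Qm raddf_sum /=.
under eq_bigr do rewrite mcoeffCM mcoeffX.
case: ifP => hb.
  have hk : (mdeg (m - b)%MM < (mdeg m).+1)%N by rewrite ltnS mdegB.
  rewrite (bigD1 (Sub (m - b)%MM hk)) /= ?lem_subr // subKm // eqxx mulr1.
  rewrite big1 ?addr0 // => k /andP [km]; rewrite eqE /= => hne.
  case: eqP => [hmk|]; last by rewrite mulr0.
  by move: hne; rewrite -hmk subKm ?eqxx.
rewrite big1 // => k km; case: eqP => [hmk|]; last by rewrite mulr0.
by move: hb; rewrite -hmk lem_subr.
Qed.


Lemma mcoeffMX' (p : A2) u b :
  (p * 'X_[u])@_b = if (u <= b)%MM then p@_(b - u) else 0.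
Proof.
case: ifP => h.
  by rewrite -{1}(submK h) addmC mcoeffMX.
apply: memN_msupp_eq0; rewrite (perm_mem (msuppMX _ _)).
by apply/mapP => -[m' _ hb]; move: h; rewrite hb lem_addr.
Qed.

Lemma Qm0 : Qm 0%MM = 1.
Proof.
apply/mpolyP => b; rewrite Qm_coef mcoeff1.
have -> : (b <= 0)%MM = (b == 0%MM).
  apply/idP/eqP => [/mnm_lepP h|->]; last exact: lepm_refl.
  by apply/mnmP => i; move: (h i); rewrite !mnm0E leqn0 => /eqP.
case: eqP => [->|] //=; rewrite subm0 mpolyX0 /coefm mdeg0 expr0 mul1r.
by rewrite big1 ?scale1r // => i _; rewrite mnm0E.
Qed.


Ltac ptw := let i := fresh "i" in
  (try apply/mnm_lepP); (try apply/mnmP); move=> i;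
  repeat match goal with H : is_true (lem _ _) |- _ => move/mnm_lepP: H => H end;
  repeat match goal with H : forall _ : 'I_n, _ |- _ => move: (H i); clear H end;
  rewrite ?mnmE; case: eqP => _; lia.

Lemma Qm_pascal m j : Qm (m + U_(j)) = Qm m * ('X_j - (X j)%:MP).
Proof.
apply/mpolyP => b; rewrite mulrBr mcoeffB mcoeffMX' [Qm m * _]mulrC mcoeffCM !Qm_coef.
set e := U_(j)%MM.
have hj0 : forall k : 'X_{1..n}, (e <= k)%MM = (k j != 0%N) by move=> k; rewrite lep1mP.
case: (boolP (e <= b)%MM) => hb.
  have E1 : (b <= m + e)%MM = (b - e <= m)%MM.
    move: hb; rewrite hj0 => hb.
    by apply/idP/idP => /mnm_lepP H; apply/mnm_lepP => i; move: (H i); rewrite !mnmE; case: eqP => [<-|_]; lia.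
  rewrite E1; case: (boolP (b - e <= m)%MM) => h1; last first.
    have -> : (b <= m)%MM = false.
      apply/negP => h2; move/negP: h1; apply; apply: lepm_trans h2; exact: lem_subr.
    by rewrite mulr0 subr0.
  have E2 : (m + e - b = m - (b - e))%MM by rewrite submBA.
  rewrite E2; set k := (m - (b - e))%MM.
  case: (boolP (b <= m)%MM) => h2.
    have hk : (e <= k)%MM.
      move: hb h2; rewrite !hj0 /k => hb /mnm_lepP h2; move: (h2 j).
      by rewrite !mnmE eqxx; lia.
    have E3 : (m - b = k - e)%MM.
      move: hb; rewrite hj0 => hb; rewrite /k; apply/mnmP => i; rewrite !mnmE.
      by case: eqP => [<-|_]; lia.
    rewrite coefm_C2 // E3 scalerBl mulrC -scalerAl -mpolyXD submK //.
  rewrite coefm_C1 ?mulr0 ?subr0 //.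
  move: hb h1 h2; rewrite !hj0 negbK /k => hb /mnm_lepP h1 h2.
  case: (boolP (b j <= m j)%N) => hbj.
    by case/negP: h2; apply/mnm_lepP => i; move: (h1 i); rewrite !mnmE; case: eqP => [<-|_]; lia.
  by rewrite !mnmE eqxx; apply/eqP; lia.
have E4 : (b <= m + e)%MM = (b <= m)%MM.
  move: hb; rewrite hj0 negbK => /eqP hb.
  by apply/idP/idP => /mnm_lepP H; apply/mnm_lepP => i; move: (H i); rewrite !mnmE; case: eqP => [<-|_]; lia.
rewrite E4 sub0r; case: (boolP (b <= m)%MM) => h2; last by rewrite mulr0 oppr0.
set k := (m + e - b)%MM.
have hb0 : b j = 0%N by move: hb; rewrite hj0 negbK => /eqP.
have hk : (e <= k)%MM.
  by rewrite hj0 /k !mnmE eqxx; apply/eqP; lia.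
have E3 : (m - b = k - e)%MM.
  move/mnm_lepP: h2 => h2.
  apply/mnmP => i; rewrite /k !mnmE; move: (h2 i).
  by case: eqP => [<-|_]; lia.
rewrite coefm_C2 // coefm_C3 ?sub0r.
  by rewrite E3 mulrC -scalerAl -mpolyXD submK // scaleNr.
apply/negP => /mnm_lepP /(_ j); rewrite /k !mnmE eqxx.
move: hb; rewrite hj0 negbK => /eqP ->; lia.
Qed.


Definition mcount (l : seq 'I_n) : 'X_{1..n} := (\sum_(j <- l) U_(j))%MM.

Lemma mcount_rcons l j : mcount (rcons l j) = (mcount l + U_(j))%MM.
Proof. by rewrite /mcount big_rcons. Qed.

Lemma mdeg_mcount l : mdeg (mcount l) = size l.
Proof.
elim/last_ind: l => [|l j IH]; first by rewrite /mcount big_nil mdeg0.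
by rewrite mcount_rcons mdegD IH mdeg1 size_rcons addn1.
Qed.

Lemma Qm_prod l : Qm (mcount l) = \prod_(j <- l) ('X_j - (X j)%:MP).
Proof.
elim/last_ind: l => [|l j IH]; first by rewrite /mcount !big_nil Qm0.
by rewrite mcount_rcons Qm_pascal IH big_rcons.
Qed.

Lemma mcount_surj (m : 'X_{1..n}) : exists l, mcount l = m.
Proof.
move: {2}(mdeg m) (erefl (mdeg m)) => d; elim: d m => [|d IH] m Hm.
  by exists [::]; move/eqP: Hm; rewrite mdeg_eq0 => /eqP ->; rewrite /mcount big_nil.
case: (pickP (fun j => m j != 0%N)) => [j hj|h0]; last first.
  have m0 : m = 0%MM by apply/mnmP => i; rewrite mnm0E; move/negbFE/eqP: (h0 i).
  by move: Hm; rewrite m0 mdeg0.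
have le1 : (U_(j) <= m)%MM by rewrite lep1mP.
have [l hl] := IH (m - U_(j))%MM (eq_add_S _ _ (etrans (esym (mdeg_subU le1)) Hm)).
by exists (rcons l j); rewrite mcount_rcons hl submK.
Qed.

Lemma Lplus_Phi m p v : Lplus_act act rho m p v = Phi rho (vf_basis (1 : P) p) v (Qm m).
Proof.
rewrite /Lplus_act /Qm Phi_sum; apply: eq_bigr => k _.
by rewrite PhiCX actZl -vf_basisM mulr1.
Qed.

Lemma key l p v : Lplus_act act rho (mcount l) p v =
  deltas (map X l) rho (vf_basis (1 : P) p) v.
Proof. by rewrite Lplus_Phi Qm_prod Phi_deltas. Qed.

End Proof.

Theorem lemma4p2 (K : closedFieldType) (charK0 : [pchar K] =i pred0)
  (n : nat) (M : lmodType K)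
  (act : {mpoly K[n]} -> M -> M) (rho : VF K n -> M -> M)
  (HAV : AVmodule act rho) (s : nat) :
  Diff act s rho <-> annihilated_by_ms_Lplus act rho s.
Proof.
split.
- move=> HD m p v Hm; have [l hl] := mcount_surj m.
  rewrite -hl (key HAV); apply: (DiffShift_deltas HAV HD).
  by rewrite size_map -(mdeg_mcount l) hl.
- move=> H; apply: (Zr_DiffShift HAV); first exact: (rho_Lin HAV).
  apply: (claimA HAV) => l Hl p v; rewrite -(key HAV); apply: H.
  by rewrite mdeg_mcount.
Qed.
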